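(* (i) For integers $p\geq 0$, $s\geq 2$, $t\geq 1$ and $n=s+t+p+1$, the graph $M_{n,n}^{s,t;-}$ is $2p$-Hamilton-biconnected. (ii) For integers $p\geq 0$ and $n\geq p+6$, the graph $N_{n,n}^{p,2}$ is $2p$-Hamilton-biconnected.
   Context: A bipartite graph $G=(X,Y;E)$ is balanced if $|X|=|Y|$; it is Hamilton-biconnected if for every $u\in X$, $v\in Y$ there is a Hamiltonian path with ends $u,v$. A vertex set $W$ is balanced if $|W\cap X|=|W\cap Y|$; $G$ is $2p$-Hamilton-biconnected if for every balanced $W$ with $|W|=2p$, the subgraph induced by $V(G)\setminus W$ is Hamilton-biconnected. $M_{n,m}^{s,t;-}$: the bipartite graph with parts $X=X_1\cup\{x_0\}\cup X_3$, $Y=Y_1\cup\{y_0\}\cup Y_3$ (disjoint), $|X_1|=s-1$, $|X_3|=n-s$, $|Y_1|=m-t-1$, $|Y_3|=t$, whose edges are all pairs between $X_1$ and $Y_1$, the edge $x_0y_0$, all pairs between $X_3$ and $Y_3$, all pairs between $x_0$ and $Y_1$, and all pairs between $X_3$ and $Y_1\cup\{y_0\}$. $N_{n,n}^{p,2}$: the balanced bipartite graph with parts $X=X_1\cup X_2\cup X_3$, $Y=Y_1\cup Y_2\cup Y_3$, $|X_1|=|Y_1|=n-p-3$, $|X_2|=|Y_2|=p+2$, $|X_3|=|Y_3|=1$, whose edges are all pairs between $X_1$ and $Y_1$, between $X_2$ and $Y_2$, between $X_1$ and $Y_2$, between $X_2$ and $Y_1\cup Y_3$, and between $X_3$ and $Y_2$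 (there is no edge between $X_3$ and $Y_3$). *)

(* Defs.v *)
From mathcomp Require Import all_boot.
Set Implicit Arguments. Unset Strict Implicit. Unset Printing Implicit Defensive.

(* A bipartite graph G = (X, Y; E) is given by two finite part types X, Y and
   an edge predicate E : X -> Y -> bool.  Its vertex set is X + Y (disjoint sum). *)

Definition bedge (X Y : finType) (E : X -> Y -> bool) : rel (X + Y) :=
  fun a b => match a, b with
             | inl x, inr y => E x y
             | inr y, inl x => E x y
             | _, _ => false
             end.

Definition ham_path_in (X Y : finType) (E : X -> Y -> bool) (S : {set X + Y})
    (a b : X + Y) : Prop :=
  exists s : seq (X + Y),
    [/\ path (bedge E) a s, last a s = b, uniq (a :: s)
      & forall z, (z \in a :: s) = (z \in S)].

Definition ham_biconnected_in (X Y : finType) (E : X -> Y -> bool)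
    (S : {set X + Y}) : Prop :=
  forall (u : X) (v : Y), inl u \in S -> inr v \in S ->
    ham_path_in E S (inl u) (inr v).

Definition balanced (X Y : finType) (W : {set X + Y}) : Prop :=
  #|[set x : X | inl x \in W]| = #|[set y : Y | inr y \in W]|.

Definition ham_biconnected_2p (X Y : finType) (E : X -> Y -> bool) (p : nat) : Prop :=
  forall W : {set X + Y}, balanced W -> #|W| = 2 * p ->
    ham_biconnected_in E (~: W).

(* M_{n,m}^{s,t;-}.  X = 'I_n with X1 = {0..s-2}, x0 = s-1, X3 = {s..n-1};
   Y = 'I_m with Y1 = {0..m-t-2}, y0 = m-t-1, Y3 = {m-t..m-1}. *)
Definition M_adj (n m s t : nat) (x : 'I_n) (y : 'I_m) : bool :=
  let inX1 := x < s.-1 in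
  let isx0 := x == s.-1 :> nat in
  let inX3 := s <= x in
  let inY1 := y < m - t - 1 in
  let isy0 := y == m - t - 1 :> nat in
  let inY3 := m - t <= y in
  [|| inX1 && inY1, isx0 && isy0, inX3 && inY3, isx0 && inY1
    | inX3 && (inY1 || isy0)].

(* N_{n,n}^{p,2}.  X = Y = 'I_n with parts
   part 1 = {0..n-p-4} (size n-p-3), part 2 = {n-p-3..n-2} (size p+2),
   part 3 = {n-1} (size 1). *)
Definition N_adj (n p : nat) (x y : 'I_n) : bool :=
  let in1 (i : 'I_n) := i < n - p - 3 in
  let in2 (i : 'I_n) := (n - p - 3 <= i) && (i < n - 1) in
  let in3 (i : 'I_n) := i == n - 1 :> nat in
  [|| in1 x && in1 y, in2 x && in2 y, in1 x && in2 y,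
      in2 x && (in1 y || in3 y) | in3 x && in2 y].

Arguments M_adj : clear implicits.
Arguments N_adj : clear implicits.

(* Main.v *)
Require Import Defs.
From mathcomp Require Import all_boot zify.
Set Implicit Arguments. Unset Strict Implicit. Unset Printing Implicit Defensive.
Definition cnd (a b : nat -> nat) (i j : nat) : Prop :=
  [/\ 0 < a 0 -> a 0 + (i != 0) <= b 2,
      0 < a 2 -> 0 < a 0 + a 1 -> b 0 + (i == 2) <= a 2,
      0 < b 0 -> b 0 + (j != 0) <= a 2
    & 0 < b 2 -> 0 < b 0 + b 1 -> a 0 + (j == 2) <= b 2].

Definition gl (b : nat -> nat) (i j : nat) : nat :=
  if i == 0 then 2 else if i == 1 then (if (j == 1) < b 1 then 1 else 2)
  else if (j == 0) < b 0 then 0 else if (j == 1) < b 1 then 1 else 2.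

Definition gm (a : nat -> nat) (i l : nat) : nat :=
  if l == 0 then 2 else if l == 1 then (if (i == 1) < a 1 then 1 else 2)
  else if (i == 0) < a 0 then 0 else if (i == 1) < a 1 then 1 else 2.

Lemma step (a b : nat -> nat) (i j : nat) : i <= 2 -> j <= 2 -> 0 < a i -> 0 < b j ->
  a 0 + a 1 + a 2 = b 0 + b 1 + b 2 -> 2 <= a 0 + a 1 + a 2 -> cnd a b i j ->
  let l := gl b i j in let m := gm a i l in
  [/\ l <= 2, m <= 2, 2 <= i + l, 2 <= l + m & [/\ (l == j) < b l, 0 < a m - (m == i)
    & cnd (fun z => a z - (z == i)) (fun z => b z - (z == l)) m j]].
Proof.
move=> hi hj hai hbj hs hk [c1 c2 c3 c4] /=.
case: i hi hai c1 c2 => [|[|[|//]]] _ hai c1 c2;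
case: j hj hbj c3 c4 => [|[|[|//]]] _ hbj c3 c4;
rewrite /gl /gm /cnd /=;
repeat (case: ifP => /= ?); repeat split; lia.
Qed.

Lemma base (a b : nat -> nat) (i j : nat) : i <= 2 -> j <= 2 -> 0 < a i -> 0 < b j ->
  a 0 + a 1 + a 2 = 1 -> b 0 + b 1 + b 2 = 1 -> cnd a b i j -> 2 <= i + j.
Proof.
move=> hi hj hai hbj hs hs' [c1 c2 c3 c4].
case: i hi hai c1 c2 => [|[|[|//]]] _ hai c1 c2;
case: j hj hbj c3 c4 => [|[|[|//]]] _ hbj c3 c4 //=; lia.
Qed.

Lemma cnd_ext (a a' b b' : nat -> nat) i j : a =1 a' -> b =1 b' -> cnd a b i j -> cnd a' b' i j.
Proof. by move=> ea eb; rewrite /cnd !ea !eb. Qed.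

Definition cX (X Y : finType) (lx : X -> nat) (S : {set X + Y}) (z : nat) :=
  #|[set x | (inl x \in S) && (lx x == z)]|.
Definition cY (X Y : finType) (ly : Y -> nat) (S : {set X + Y}) (z : nat) :=
  #|[set y | (inr y \in S) && (ly y == z)]|.

Lemma card3 (T : finType) (P : pred T) (f : T -> nat) : (forall x, f x <= 2) ->
  #|[set x | P x]| = #|[set x | P x && (f x == 0)]| + #|[set x | P x && (f x == 1)]|
                     + #|[set x | P x && (f x == 2)]|.
Proof.
move=> hf.
rewrite -(cardsID [set x | f x == 0] [set x | P x]).
rewrite -(cardsID [set x | f x == 1] ([set x | P x] :\: [set x | f x == 0])).
have -> : [set x | P x] :&: [set x | f x == 0] = [set x | P x && (f x == 0)].
  by apply/setP => x; rewrite !inE.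
have -> : ([set x | P x] :\: [set x | f x == 0]) :&: [set x | f x == 1]
          = [set x | P x && (f x == 1)].
  by apply/setP => x; rewrite !inE; case: (f x) => [|[|]]; rewrite ?andbF ?andbT.
have -> : ([set x | P x] :\: [set x | f x == 0]) :\: [set x | f x == 1]
          = [set x | P x && (f x == 2)].
  apply/setP => x; rewrite !inE; have := hf x.
  by case: (f x) => [|[|[|]]] //= _; rewrite ?andbF ?andbT.
by rewrite addnA.
Qed.

Lemma cX_rm (X Y : finType) (lx : X -> nat) (S : {set X + Y}) u y z :
  inl u \in S -> cX lx (S :\ inl u :\ inr y) z = cX lx S z - (z == lx u).
Proof.
move=> hu; rewrite /cX.
have -> : [set x | (inl x \in S :\ inl u :\ inr y) && (lx x == z)]
   = [set x | (inl x \in S) && (lx x == z)] :\ u.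
  by apply/setP => x; rewrite !inE /= andbA.
rewrite [in RHS](cardsD1 u) !inE hu /= eq_sym.
case: (lx u == z) => /=; lia.
Qed.

Lemma cY_rm (X Y : finType) (ly : Y -> nat) (S : {set X + Y}) u y z :
  inr y \in S -> cY ly (S :\ inl u :\ inr y) z = cY ly S z - (z == ly y).
Proof.
move=> hy; rewrite /cY.
have -> : [set y' | (inr y' \in S :\ inl u :\ inr y) && (ly y' == z)]
   = [set y' | (inr y' \in S) && (ly y' == z)] :\ y.
  by apply/setP => y'; rewrite !inE /= andbA.
rewrite [in RHS](cardsD1 y) !inE hy /= eq_sym.
case: (ly y == z) => /=; lia.
Qed.

Lemma sum_rm (f : nat -> nat) i : i <= 2 -> 0 < f i ->
  (f 0 - (0 == i)) + (f 1 - (1 == i)) + (f 2 - (2 == i)) = f 0 + f 1 + f 2 - 1.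
Proof. by case: i => [|[|[|]]] //= _; lia. Qed.

Lemma lev_ham (X Y : finType) (E : X -> Y -> bool) (lx : X -> nat) (ly : Y -> nat) :
  (forall x, lx x <= 2) -> (forall y, ly y <= 2) ->
  (forall x y, E x y = (2 <= lx x + ly y)) ->
  forall k (S : {set X + Y}) u v,
  cX lx S 0 + cX lx S 1 + cX lx S 2 = k.+1 ->
  cY ly S 0 + cY ly S 1 + cY ly S 2 = k.+1 ->
  inl u \in S -> inr v \in S -> cnd (cX lx S) (cY ly S) (lx u) (ly v) ->
  ham_path_in E S (inl u) (inr v).
Proof.
move=> hx hy hE k; elim: k => [|k IH] S u v sa sb hu hv hc.
- have hau : 0 < cX lx S (lx u) by apply/card_gt0P; exists u; rewrite inE hu eqxx.
  have hbv : 0 < cY ly S (ly v) by apply/card_gt0P; exists v; rewrite inE hv eqxx.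
  have huv := base (hx u) (hy v) hau hbv sa sb hc.
  have /cards1P [w hw] : #|[set x | inl x \in S]| == 1 by rewrite (card3 _ hx) -/(cX lx S 0) sa.
  have /cards1P [w' hw'] : #|[set y | inr y \in S]| == 1 by rewrite (card3 _ hy) -/(cY ly S 0) sb.
  have ex x : (inl x \in S) = (x == w).
    by have := congr1 (fun A : {set X} => x \in A) hw; rewrite !inE.
  have ey y : (inr y \in S) = (y == w').
    by have := congr1 (fun A : {set Y} => y \in A) hw'; rewrite !inE.
  move: (hu) (hv); rewrite ex ey => /eqP eu /eqP ev; subst w w'.
  exists [:: inr v]; split => //=.
  + by rewrite andbT hE.
  + by case=> [x|y]; rewrite !inE ?ex ?ey /= ?orbF.
- set a := cX lx S; set b := cY ly S.
  have hau : 0 < a (lx u) by apply/card_gt0P; exists u; rewrite inE hu eqxx.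
  have hbv : 0 < b (ly v) by apply/card_gt0P; exists v; rewrite inE hv eqxx.
  have := step (hx u) (hy v) hau hbv (etrans sa (esym sb)) _ hc.
  rewrite sa => /(_ isT).
  set l := gl b (lx u) (ly v); set m := gm a (lx u) l.
  case=> hl hm hul hlm [hbl ham hc'].
  have [y [hyS hyl hyv]] : exists y, [/\ inr y \in S, ly y = l & y != v].
    have : 0 < #|[set y | (inr y \in S) && (ly y == l)] :\ v|.
      move: hbl; rewrite /b /cY (cardsD1 v) !inE hv /=.
      by rewrite [ly v == l]eq_sym; case: (l == ly v) => /=; lia.
    by case/card_gt0P => y; rewrite !inE => /and3P [? ? /eqP ?]; exists y.
  have [x [hxS hxm hxu]] : exists x, [/\ inl x \in S, lx x = m & x != u].
    have : 0 < #|[set x | (inl x \in S) && (lx x == m)] :\ u|.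
      have e : a m = #|[set x | (inl x \in S) && (lx x == m)]| by [].
      move: ham; rewrite e (cardsD1 u) !inE hu /=.
      by rewrite [lx u == m]eq_sym; case: (m == lx u) => /=; lia.
    by case/card_gt0P => x; rewrite !inE => /and3P [? ? /eqP ?]; exists x.
  set S' := S :\ inl u :\ inr y.
  have ea : cX lx S' =1 (fun z => a z - (z == lx u)) by move=> z; apply: cX_rm.
  have eb : cY ly S' =1 (fun z => b z - (z == l)) by move=> z; rewrite cY_rm // hyl.
  have hxS' : inl x \in S' by rewrite !inE /= hxu.
  have hvS' : inr v \in S' by rewrite !inE /= eq_sym hyv.
  have [s [ps ls us ms]] : ham_path_in E S' (inl x) (inr v).
    apply: IH => //.
    + by rewrite !ea sum_rm // /a sa.
    + by rewrite !eb sum_rm ?(leq_ltn_trans (leq0n _) hbl) // /b sb.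
    + by rewrite hxm; apply: cnd_ext hc' => z; rewrite ?ea ?eb.
  exists [:: inr y, inl x & s]; split => //=.
  + by rewrite !hE hyl hxm hul addnC hlm ps.
  + have nu : inl u \notin inl x :: s by rewrite ms !inE eqxx.
    have ny : inr y \notin inl x :: s by rewrite ms !inE eqxx.
    move: us => /= /andP [-> ->]; rewrite ny andbT.
    by move: nu; rewrite !inE /= => ->.
  + move=> z; rewrite in_cons in_cons ms !inE.
    case: (z =P inl u) => [->|_]; first by rewrite hu.
    by case: (z =P inr y) => [->|_] //=; rewrite hyS.
Qed.
Lemma card_int n a b : #|[set x : 'I_n | a <= x < b]| <= b - a.
Proof.
rewrite cardE -(size_map val).
apply: leq_trans (uniq_leq_size (s2 := iota a (b - a)) _ _) _.
- by rewrite (map_inj_uniq val_inj) enum_uniq.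
- move=> z /mapP [x]; rewrite mem_enum inE => /andP [h1 h2] ->; rewrite mem_iota /=; lia.
- by rewrite size_iota.
Qed.

Lemma cX_le n (Y : finType) (lx : 'I_n -> nat) (S : {set 'I_n + Y}) z a b :
  (forall x : 'I_n, lx x = z -> a <= x < b) -> cX lx S z <= b - a.
Proof.
move=> h; apply: leq_trans (card_int n a b); apply: subset_leq_card.
by apply/subsetP => x; rewrite !inE => /andP [_ /eqP /h].
Qed.

Lemma cY_le n (X : finType) (ly : 'I_n -> nat) (S : {set X + 'I_n}) z a b :
  (forall y : 'I_n, ly y = z -> a <= y < b) -> cY ly S z <= b - a.
Proof.
move=> h; apply: leq_trans (card_int n a b); apply: subset_leq_card.
by apply/subsetP => x; rewrite !inE => /andP [_ /eqP /h].
Qed.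

Lemma lM n s t (x : 'I_n) (y : 'I_n) : 2 <= s ->
  M_adj n n s t x y = (2 <= (if x < s.-1 then 0 else if x == s.-1 :> nat then 1 else 2)
     + (if y < n - t - 1 then 2 else if y == n - t - 1 :> nat then 1 else 0)).
Proof.
move=> hs; rewrite /M_adj; repeat case: ifP => ?; lia.
Qed.

Lemma lN n p (x : 'I_n) (y : 'I_n) :
  N_adj n p x y = (2 <= (if x < n - p - 3 then 1 else if x < n - 1 then 2 else 0)
     + (if y < n - p - 3 then 1 else if y < n - 1 then 2 else 0)).
Proof.
have := ltn_ord x; have := ltn_ord y.
rewrite /N_adj; repeat case: ifP => ?; lia.
Qed.

Lemma card_sumset (X Y : finType) (W : {set X + Y}) :
  #|W| = #|[set x | inl x \in W]| + #|[set y | inr y \in W]|.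
Proof.
have eW : W = inl @: [set x | inl x \in W] :|: inr @: [set y | inr y \in W].
  apply/setP => -[x|y]; rewrite !inE.
  - rewrite (mem_imset _ _ (@inl_inj X Y)) inE.
    have -> : (inl x \in inr @: [set y | inr y \in W]) = false.
      by apply/negbTE/imsetP => -[y _].
    by rewrite orbF.
  - rewrite (mem_imset _ _ (@inr_inj X Y)) inE.
    have -> : (inr y \in inl @: [set x | inl x \in W]) = false.
      by apply/negbTE/imsetP => -[x _].
    by [].
rewrite {1}eW cardsU (card_imset _ (@inl_inj X Y)) (card_imset _ (@inr_inj X Y)).
have -> : inl @: [set x | inl x \in W] :&: inr @: [set y | inr y \in W] = set0.
  apply/setP => z; rewrite !inE.
  by apply/negP => /andP [/imsetP [x _ ->] /imsetP [y _]].
by rewrite cards0 subn0.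
Qed.

Lemma compl_count n (W : {set 'I_n + 'I_n}) p :
  balanced W -> #|W| = 2 * p ->
  #|[set x | inl x \in ~: W]| = n - p /\ #|[set y | inr y \in ~: W]| = n - p.
Proof.
rewrite /balanced card_sumset => hb hW.
have e1 : [set x | inl x \in ~: W] = ~: [set x | inl x \in W].
  by apply/setP => x; rewrite !inE.
have e2 : [set y | inr y \in ~: W] = ~: [set y | inr y \in W].
  by apply/setP => x; rewrite !inE.
have hp : #|[set x | inl x \in W]| = p by move: hW; rewrite -hb addnn -mul2n => /eqP; rewrite eqn_mul2l /= => /eqP.
have hq : #|[set y | inr y \in W]| = p by move: hW; rewrite hb addnn -mul2n => /eqP; rewrite eqn_mul2l /= => /eqP.
rewrite e1 e2; split; rewrite cardsCs setCK card_ord ?hp ?hq //.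
Qed.

Theorem lemma2p7 :
  (forall p s t n : nat, 2 <= s -> 1 <= t -> n = s + t + p + 1 ->
     ham_biconnected_2p (M_adj n n s t) p) /\
  (forall p n : nat, p + 6 <= n -> ham_biconnected_2p (N_adj n p) p).
Proof.
split.
- move=> p s t n hs ht hn W hb hW u v hu hv.
  pose lx := fun x : 'I_n => if x < s.-1 then 0 else if x == s.-1 :> nat then 1 else 2.
  pose ly := fun y : 'I_n => if y < n - t - 1 then 2 else if y == n - t - 1 :> nat then 1 else 0.
  have hx : forall x, lx x <= 2 by move=> x; rewrite /lx; repeat case: ifP => _.
  have hy : forall y, ly y <= 2 by move=> y; rewrite /ly; repeat case: ifP => _.
  have [cx cy] := compl_count hb hW.
  have ex := card3 (fun x => inl x \in ~: W) hx.
  have ey := card3 (fun y => inr y \in ~: W) hy.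
  rewrite /= cx in ex; rewrite /= cy in ey.
  have ha0 : cX lx (~: W) 0 <= s.-1 - 0.
    apply: cX_le => x; have := ltn_ord x; rewrite /lx; repeat case: ifP => ?; lia.
  have ha1 : cX lx (~: W) 1 <= s - s.-1.
    apply: cX_le => x; have := ltn_ord x; rewrite /lx; repeat case: ifP => ?; lia.
  have hb0 : cY ly (~: W) 0 <= n - (n - t).
    apply: cY_le => x; have := ltn_ord x; rewrite /ly; repeat case: ifP => ?; lia.
  have hb1 : cY ly (~: W) 1 <= (n - t) - (n - t - 1).
    apply: cY_le => x; have := ltn_ord x; rewrite /ly; repeat case: ifP => ?; lia.
  apply: (@lev_ham _ _ _ lx ly hx hy _ (n - p - 1)) => //.
  + by move=> x y; rewrite lM.
  + rewrite /cX -ex; lia.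
  + rewrite /cY -ey; lia.
  + rewrite /cnd /cX /cY -/(cX lx (~: W) 0) -/(cX lx (~: W) 1) -/(cX lx (~: W) 2)
      -/(cY ly (~: W) 0) -/(cY ly (~: W) 1) -/(cY ly (~: W) 2).
    move: ex ey; rewrite -/(cX lx (~: W) 0) -/(cX lx (~: W) 1) -/(cX lx (~: W) 2)
      -/(cY ly (~: W) 0) -/(cY ly (~: W) 1) -/(cY ly (~: W) 2) => ex ey.
    split=> *; lia.
- move=> p n hn W hb hW u v hu hv.
  pose lx := fun x : 'I_n => if x < n - p - 3 then 1 else if x < n - 1 then 2 else 0.
  have hx : forall x, lx x <= 2 by move=> x; rewrite /lx; repeat case: ifP => _.
  have [cx cy] := compl_count hb hW.
  have ex := card3 (fun x => inl x \in ~: W) hx.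
  have ey := card3 (fun y => inr y \in ~: W) hx.
  rewrite /= cx in ex; rewrite /= cy in ey.
  have ha0 : cX lx (~: W) 0 <= n - (n - 1).
    apply: cX_le => x; have := ltn_ord x; rewrite /lx; repeat case: ifP => ?; lia.
  have ha1 : cX lx (~: W) 1 <= n - p - 3 - 0.
    apply: cX_le => x; have := ltn_ord x; rewrite /lx; repeat case: ifP => ?; lia.
  have hb0 : cY lx (~: W) 0 <= n - (n - 1).
    apply: cY_le => x; have := ltn_ord x; rewrite /lx; repeat case: ifP => ?; lia.
  have hb1 : cY lx (~: W) 1 <= n - p - 3 - 0.
    apply: cY_le => x; have := ltn_ord x; rewrite /lx; repeat case: ifP => ?; lia.
  apply: (@lev_ham _ _ _ lx lx hx hx _ (n - p - 1)) => //.
  + by move=> x y; rewrite lN.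
  + rewrite /cX -ex; lia.
  + rewrite /cY -ey; lia.
  + rewrite /cnd.
    move: ex ey; rewrite -/(cX lx (~: W) 0) -/(cX lx (~: W) 1) -/(cX lx (~: W) 2)
      -/(cY lx (~: W) 0) -/(cY lx (~: W) 1) -/(cY lx (~: W) 2) => ex ey.
    split=> *; lia.
Qed.
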